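(* Let $Y$ be a real normed space. (i) Let $A\neq Y$ be a nonempty closed convex cone of $Y$ (equivalently $A^*\neq\{0\}$) and $e\in Y$. Then $e\in\operatorname{int}(A)$ if and only if $\inf\{y^*(e):y^*\in S_{Y^*}\cap A^*\}>0$. Consequently, $\operatorname{int}(A)\neq\emptyset$ if and only if either $A=Y$ (equivalently $A^*=\{0\}$) or $0\notin\overline{\operatorname{conv}}^{w^*}(S_{Y^*}\cap A^* )$. (ii) Let $K$ be a nonempty closed convex subset of $Y$. Then $\operatorname{int}(\mathcal{R}_K)\neq\emptyset$ if and only if either $K=Y$ or $0\notin\overline{\operatorname{conv}}^{w^*}(S_{Y^*}\cap(-\operatorname{bar}(K)))$.
   Context: $Y^*$ is the dual of $Y$, $S_{Y^*}$ its unit sphere, $\overline{\operatorname{conv}}^{w^*}$ the weak-star closed convex hull. $A^*:=\{y^*\in Y^*:y^*(y)\ge0\ \forall y\in A\}$. $\operatorname{bar}(K):=\{y^*\in Y^*:\sup_{y\in K}y^*(y)<+\infty\}$; $\mathcal{R}_K:=\{v\in Y:x+\lambda v\in K\ \forall\lambda>0,\forall x\in K\}$. *)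

(* Defs.v *)
From HB Require Import structures.
From mathcomp Require Import all_boot all_order all_algebra.
From mathcomp Require Import all_classical all_reals all_analysis.
Set Implicit Arguments. Unset Strict Implicit. Unset Printing Implicit Defensive.
Import Order.TTheory GRing.Theory Num.Theory.
Import numFieldNormedType.Exports.
Local Open Scope classical_set_scope.
Local Open Scope ring_scope.

Section Dual.
Variables (R : realType) (Y : normedModType R).

Definition is_dual (f : Y -> R) : Prop :=
  (forall (a : R) (x y : Y), f (a *: x + y) = a * f x + f y) /\ continuous f.

Definition dual_norm (f : Y -> R) : R :=
  sup [set `|f y| | y in [set y : Y | `|y| <= 1]].

Definition dual_sphere : set (Y -> R) :=
  [set f | is_dual f /\ dual_norm f = 1].

Definition dual_cone (A : set Y) : set (Y -> R) :=
  [set f | is_dual f /\ forall y, A y -> 0 <= f y].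

Definition barrier (K : set Y) : set (Y -> R) :=
  [set f | is_dual f /\ exists M : R, forall y, K y -> f y <= M].

Definition dual_opp (C : set (Y -> R)) : set (Y -> R) :=
  [set f | C (fun y => - f y)].

Definition recession_cone (K : set Y) : set Y :=
  [set v | forall x, K x -> forall l : R, 0 < l -> K (x + l *: v)].

Definition convex_set_Y (A : set Y) : Prop :=
  forall x y (t : R), A x -> A y -> 0 <= t <= 1 -> A (t *: x + (1 - t) *: y).

Definition cone (A : set Y) : Prop :=
  forall (t : R) x, 0 <= t -> A x -> A (t *: x).

Definition convex_dual (C : set (Y -> R)) : Prop :=
  forall f g (t : R), C f -> C g -> 0 <= t <= 1 ->
    C (fun y => t * f y + (1 - t) * g y).

(* weak-star closedness of a subset of the dual: its complement in Y^* is open for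
   the weak-star topology, whose basic neighbourhoods of f are
   { g in the dual: |g y - f y| < eps for all y in a finite set s }. *)
Definition wstar_closed (C : set (Y -> R)) : Prop :=
  forall f, is_dual f -> ~ C f ->
    exists (s : seq Y) (eps : R), 0 < eps /\
      forall g, is_dual g -> (forall y, y \in s -> `|g y - f y| < eps) -> ~ C g.

Definition wstar_closed_conv (S : set (Y -> R)) : set (Y -> R) :=
  [set f | is_dual f /\
     forall C, S `<=` C -> convex_dual C -> wstar_closed C -> C f].

End Dual.
Arguments dual_sphere : clear implicits.

(* Main.v *)
Require Import Defs.
From HB Require Import structures.
From mathcomp Require Import all_boot all_order all_algebra.
From mathcomp Require Import all_classical all_reals all_analysis.
From mathcomp Require Import lra ring.
Set Implicit Arguments. Unset Strict Implicit. Unset Printing Implicit Defensive.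
Import Order.TTheory GRing.Theory Num.Theory.
Import numFieldNormedType.Exports.
Local Open Scope classical_set_scope.
Local Open Scope ring_scope.

Section Inf.
Variable R : realType.
Definition iinf (I : Type) (D : set I) (f : I -> R) := inf [set f i | i in D].

Lemma iinf_le I (D : set I) f (m : R) i :
  (forall j, D j -> m <= f j) -> D i -> iinf D f <= f i.
Proof.
move=> hm Di; apply: ge_inf; last by exists i.
by exists m => _ [j Dj <-]; exact: hm.
Qed.

Lemma le_iinf I (D : set I) f (m : R) :
  D !=set0 -> (forall j, D j -> m <= f j) -> m <= iinf D f.
Proof.
move=> [i Di] hm; apply: lb_le_inf; first by exists (f i), i.
by move=> _ [j Dj <-]; exact: hm.
Qed.

Lemma iinf_add I J (D1 : set I) (D2 : set J) f1 f2 (m1 m2 z : R) :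
  D1 !=set0 -> D2 !=set0 -> (forall i, D1 i -> m1 <= f1 i) ->
  (forall j, D2 j -> m2 <= f2 j) ->
  (forall i j, D1 i -> D2 j -> z <= f1 i + f2 j) -> z <= iinf D1 f1 + iinf D2 f2.
Proof.
move=> n1 n2 b1 b2 h.
suff : z - iinf D1 f1 <= iinf D2 f2 by lra.
apply: le_iinf => // j Dj.
suff : z - f2 j <= iinf D1 f1 by lra.
apply: le_iinf => // i Di.
have := h i j Di Dj; lra.
Qed.
End Inf.

Section HB.
Variables (R : realType) (V : lmodType R).
Definition sublin (q : V -> R) := (forall x y, q (x + y) <= q x + q y) /\
  (forall (l : R) x, 0 <= l -> q (l *: x) = l * q x).

Lemma sublin0 q : sublin q -> q 0 = 0.
Proof. by case=> _ h; rewrite -(scale0r (0:V)) h // mul0r. Qed.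

Lemma sublin_lb q x : sublin q -> - q (- x) <= q x.
Proof. move=> hq; have := hq.1 x (-x); rewrite subrr sublin0 //; lra. Qed.

Lemma hom_of_ge (f : V -> R) : f 0 = 0 ->
  (forall l x, 0 < l -> l * f x <= f (l *: x)) ->
  forall l x, 0 <= l -> f (l *: x) = l * f x.
Proof.
move=> f0 H l x; rewrite le_eqVlt => /orP[/eqP<-|hl].
  by rewrite scale0r f0 mul0r.
apply: le_anti; rewrite H // andbT.
have h : l^-1 * f (l *: x) <= f x.
  by have := H l^-1 (l *: x); rewrite scalerA mulVf ?gt_eqF // scale1r; apply; rewrite invr_gt0.
have := ler_wpM2l (ltW hl) h; rewrite mulrA mulfV ?gt_eqF // mul1r.
by [].
Qed.
End HB.

Section HB2.
Variables (R : realType) (V : lmodType R).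

Section Shift.
Variables (q : V -> R) (y : V).
Hypothesis hq : sublin q.
Let D := [set t : R | 0 <= t].
Let g x t := q (x + t *: y) - t * q y.
Definition qshift x := iinf D (g x).

Let Dn : D !=set0. Proof. by exists 0; rewrite /D /= lexx. Qed.

Let lbg x t : D t -> - q (- x) <= g x t.
Proof.
move=> Dt; rewrite /g; have := hq.1 (x + t *: y) (-x).
rewrite (addrC x) addrK hq.2 //; lra.
Qed.

Lemma qshift_le x : qshift x <= q x.
Proof.
have := @iinf_le _ _ D (g x) _ 0 (@lbg x) (lexx 0).
by rewrite /g scale0r addr0 mul0r subr0.
Qed.

Lemma qshift_le1 x : qshift x <= q (x + y) - q y.
Proof.
have := @iinf_le _ _ D (g x) _ 1 (@lbg x) ler01.
by rewrite /g scale1r mul1r.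
Qed.

Lemma qshift_sublin : sublin qshift.
Proof.
split.
  move=> x1 x2; apply: (iinf_add Dn Dn (@lbg x1) (@lbg x2)) => t1 t2 D1 D2.
  have D12 : D (t1 + t2) by rewrite /D /= addr_ge0.
  apply: le_trans (iinf_le (@lbg (x1 + x2)) D12) _.
  rewrite /g; have := hq.1 (x1 + t1 *: y) (x2 + t2 *: y).
  rewrite addrACA -scalerDl; lra.
apply: hom_of_ge.
  apply: le_anti; apply/andP; split.
    by have := qshift_le 0; rewrite (sublin0 hq).
  apply: le_iinf => // t Dt; rewrite /g add0r hq.2 //; lra.
move=> l x hl; apply: le_iinf => // t Dt.
have Dt' : D (t / l) by rewrite /D /= divr_ge0 // ltW.
have := iinf_le (@lbg x) Dt'.
rewrite /qshift /g => h.
have := ler_wpM2l (ltW hl) h.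
have -> : l *: x + t *: y = l *: (x + (t / l) *: y).
  by rewrite scalerDr scalerA mulrCA mulfV ?gt_eqF // mulr1.
have e : l * (t / l) = t by rewrite mulrCA mulfV ?gt_eqF // mulr1.
rewrite hq.2; last exact: ltW hl.
by rewrite mulrBr mulrA e.
Qed.
End Shift.

Section Zorn.
Variable P : V -> R.
Hypothesis hP : sublin P.

Lemma min_sublin_linear : exists F : V -> R,
  (forall a x y, F (a *: x + y) = a * F x + F y) /\ forall x, F x <= P x.
Proof.
pose T := {q : V -> R | sublin q /\ forall x, q x <= P x}.
pose Rel (a b : T) := `[< forall x, sval b x <= sval a x >].
have [t tmax] : exists t : T, forall s : T, Rel t s -> s = t.
  apply: (@Zorn T Rel).
  - by move=> a; apply/asboolP => x.
  - move=> a b c /asboolP hab /asboolP hbc; apply/asboolP => x.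
    exact: le_trans (hbc x) (hab x).
  - move=> [a ha] [b hb] /asboolP /= hab /asboolP /= hba; apply: eq_exist.
    by apply: funext => x; apply: le_anti; rewrite hab hba.
  - move=> A Atot.
    have [A0|A0] := pselect (A !=set0); last first.
      exists (exist _ P (conj hP (fun x => lexx (P x)))) => s As.
      by exfalso; apply: A0; exists s.
    pose m x := iinf A (fun a : T => sval a x).
    have lbm x : forall a : T, A a -> - P (- x) <= sval a x.
      move=> [a [ha haP]] _ /=; apply: le_trans (sublin_lb x ha).
      by rewrite lerN2.
    have mle x (a : T) : A a -> m x <= sval a x by move=> Aa; exact: iinf_le (lbm x) Aa.
    have msub : sublin m.
      split.
        move=> x y; apply: (iinf_add A0 A0 (lbm x) (lbm y)) => a b Aa Ab.
        have [/asboolP hab|/asboolP hba] := Atot a b Aa Ab.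
          apply: le_trans (mle _ b Ab) _.
          have := (proj1 (proj2_sig b)).1 x y; have := hab x; lra.
        apply: le_trans (mle _ a Aa) _.
        have := (proj1 (proj2_sig a)).1 x y; have := hba y; lra.
      apply: hom_of_ge.
        apply: le_anti; apply/andP; split.
          case: A0 => a Aa; have := mle 0 a Aa.
          by rewrite (sublin0 (proj1 (proj2_sig a))).
        by apply: le_iinf => // a Aa; rewrite (sublin0 (proj1 (proj2_sig a))).
      move=> l x hl; apply: le_iinf => // a Aa.
      have := ler_wpM2l (ltW hl) (mle x a Aa).
      by rewrite -(proj1 (proj2_sig a)).2 //; exact: ltW.
    have mP x : m x <= P x.
      case: A0 => a Aa; apply: le_trans (mle x a Aa) _.
      by case: (proj2_sig a) => _; apply.
    exists (exist _ m (conj msub mP)) => s As; apply/asboolP => x /=.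
    exact: mle.
case: t tmax => q [hq hqP] tmax.
have qs y x : qshift q y x = q x.
  have hs : sublin (qshift q y) /\ forall x, qshift q y x <= P x.
    split; first exact: qshift_sublin y hq.
    by move=> z; apply: le_trans (qshift_le y hq z) (hqP z).
  have := tmax (exist _ (qshift q y) hs).
  have hr : Rel (exist (fun q : V -> R => sublin q /\ (forall x : V, q x <= P x)) q
       (conj hq hqP)) (exist _ (qshift q y) hs).
    by apply/asboolP => z /=; exact: qshift_le y hq z.
  by move=> /(_ hr) /(congr1 sval) /= ->.
have qadd x y : q (x + y) = q x + q y.
  apply: le_anti; rewrite hq.1 /=.
  have := qshift_le1 y hq x; rewrite qs; lra.
have qN x : q (- x) = - q x.
  have := qadd x (-x); rewrite subrr (sublin0 hq); lra.
exists q; split => // a x y; rewrite qadd; congr (_ + _).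
have [ha|ha] := leP 0 a; first by rewrite hq.2.
have -> : a *: x = - ((- a) *: x) by rewrite scaleNr opprK.
rewrite qN hq.2; last by rewrite oppr_ge0 ltW.
by rewrite mulNr opprK.
Qed.
End Zorn.
End HB2.

Section Lin.
Variables (R : realType) (V : lmodType R).
Definition islin (F : V -> R) := forall a x y, F (a *: x + y) = a * F x + F y.
Variable F : V -> R.
Hypothesis hF : islin F.
Lemma lin0 : F 0 = 0.
Proof. have := hF (-1) 0 0; rewrite scaler0 add0r mulN1r; lra. Qed.
Lemma linD x y : F (x + y) = F x + F y.
Proof. by have := hF 1 x y; rewrite scale1r mul1r. Qed.
Lemma linZ a x : F (a *: x) = a * F x.
Proof. by have := hF a x 0; rewrite addr0 lin0 addr0. Qed.
Lemma linN x : F (- x) = - F x.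
Proof. by rewrite -scaleN1r linZ mulN1r. Qed.
Lemma linB x y : F (x - y) = F x - F y.
Proof. by rewrite linD linN. Qed.
End Lin.

Section Cont.
Variables (R : realType) (E : normedModType R).
Lemma cont_of_bound (F : E -> R) (M : R) : islin F -> 0 < M ->
  (forall u, `|F u| <= M * `|u|) -> continuous F.
Proof.
move=> hl hM hb x; apply/(@cvgrPdist_lt _ _ _ (nbhs x)) => e e0; near=> z.
rewrite -(linB hl) (le_lt_trans (hb _))// -?ltr_pdivlMl//.
by near: z; apply: cvgr_dist_lt => //; rewrite mulrC divr_gt0.
Unshelve. all: by end_near. Qed.
End Cont.
Section Sep.
Variables (R : realType) (E : normedModType R).

Lemma comb_eq (s1 s2 : R) (x c1 c2 : E) : 0 < s1 + s2 ->
  (s1 + s2) *: (x - ((s1 / (s1 + s2)) *: c1 + (1 - s1 / (s1 + s2)) *: c2)) =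
  s1 *: (x - c1) + s2 *: (x - c2).
Proof.
move=> hS.
have e1 : (s1 + s2) * (s1 / (s1 + s2)) = s1 by rewrite mulrCA mulfV ?gt_eqF // mulr1.
have e2 : (s1 + s2) * (1 - s1 / (s1 + s2)) = s2.
  rewrite mulrBr e1 mulr1; lra.
rewrite scalerBr scalerDr !scalerA e1 e2 scalerDl !scalerBr.
by rewrite opprD addrACA.
Qed.

Lemma sep (C : set E) (x : E) (r : R) : C !=set0 -> convex_set_Y C -> 0 < r ->
  (forall c, C c -> r <= `|x - c|) ->
  exists F : E -> R, islin F /\ (forall u, `|F u| <= `|u|) /\
    (forall c, C c -> F x + r <= F c).
Proof.
move=> [c0 Cc0] cvx r0 hr.
pose D := [set p : R * E | 0 <= p.1 /\ C p.2].
pose h (y : E) (p : R * E) := `|y - p.1 *: (x - p.2)| - p.1 * r.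
pose Pf y := iinf D (h y).
have Dn : D !=set0 by exists (0, c0); split => //=.
have lb y : forall p, D p -> - `|y| <= h y p.
  move=> [s c] [/= s0 Cc]; rewrite /h /=.
  have := ler_normD (s *: (x - c) - y) y; rewrite subrK distrC normrZ ger0_norm //.
  have := ler_wpM2l s0 (hr c Cc); lra.
have Pfle y p : D p -> Pf y <= h y p by move=> Dp; exact: iinf_le (lb y) Dp.
have Pfsub : sublin Pf.
  split.
    move=> y1 y2; apply: (iinf_add Dn Dn (lb y1) (lb y2)) => [[s1 c1] [s2 c2]] [/= s10 C1] [/= s20 C2].
    have [S0|S0] := eqVneq (s1 + s2) 0.
      have e1 : s1 = 0 by lra.
      have e2 : s2 = 0 by lra.
      apply: le_trans (Pfle _ (0, c1) _) _; first by split.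
      by rewrite /h /= e1 e2 !scale0r !mul0r !subr0 ler_normD.
    have SP : 0 < s1 + s2 by rewrite lt_def S0 addr_ge0.
    have Dp : D (s1 + s2, (s1 / (s1 + s2)) *: c1 + (1 - s1 / (s1 + s2)) *: c2).
      split => //=; first exact: ltW.
      apply: cvx => //; rewrite divr_ge0 ?ler_pdivrMr ?mul1r ?lerDl //=; exact: ltW.
    apply: le_trans (Pfle _ _ Dp) _; rewrite /h /= comb_eq //.
    have -> : y1 + y2 - (s1 *: (x - c1) + s2 *: (x - c2)) =
      (y1 - s1 *: (x - c1)) + (y2 - s2 *: (x - c2)) by rewrite opprD addrACA.
    have := ler_normD (y1 - s1 *: (x - c1)) (y2 - s2 *: (x - c2)); lra.
  apply: hom_of_ge.
    apply: le_anti; apply/andP; split.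
      by apply: le_trans (Pfle _ (0, c0) _) _; rewrite /h /= ?scale0r ?subr0 ?normr0 ?mul0r ?subr0.
    by have := le_iinf Dn (lb 0); rewrite normr0 oppr0.
  move=> l y hl; apply: le_iinf => // [[s c]] [/= s0 Cc].
  have Dp : D (s / l, c) by split => //=; rewrite divr_ge0 // ltW.
  have := ler_wpM2l (ltW hl) (Pfle y _ Dp); rewrite /h /=.
  have e : l * (s / l) = s by rewrite mulrCA mulfV ?gt_eqF // mulr1.
  rewrite mulrBr mulrA e.
  have -> : `|l *: y - s *: (x - c)| = l * `|y - (s / l) *: (x - c)|.
    by rewrite -[in LHS]e -[in LHS]scalerA -[in LHS]scalerBr normrZ gtr0_norm.
  by [].
have [F [hF FP]] := min_sublin_linear Pfsub.
have Fle u : F u <= `|u|.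
  apply: le_trans (FP u) _; apply: le_trans (Pfle _ (0, c0) _) _ => //.
  by rewrite /h /= scale0r subr0 mul0r subr0.
exists F; split => //; split.
  move=> u; rewrite ler_norml Fle andbT.
  by have := Fle (- u); rewrite (linN hF) normrN lerNl.
move=> c Cc; have := FP (x - c).
have := Pfle (x - c) (1, c) (conj ler01 Cc).
rewrite /h /= scale1r subrr normr0 mul1r (linB hF); lra.
Qed.
End Sep.

Section DualY.
Variables (R : realType) (Y : normedModType R).

Lemma closed_gap (K : set Y) x : closed K -> ~ K x ->
  exists2 r : R, 0 < r & forall c, K c -> r <= `|x - c|.
Proof.
move=> cK Kx.
have : nbhs x (~` K) by apply: open_nbhs_nbhs; split => //; exact: closed_openC.
move=> /nbhs_normP [r r0 hr]; exists r => // c Kc.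
rewrite leNgt; apply/negP => hc; exact: (hr c hc).
Qed.

Lemma isdual_of_bound (F : Y -> R) M : islin F -> 0 < M ->
  (forall u, `|F u| <= M * `|u|) -> is_dual F.
Proof. by move=> hl hM hb; split => //; exact: cont_of_bound hl hM hb. Qed.

Definition nset (f : Y -> R) := [set `|f y| | y in [set y : Y | `|y| <= 1]].

Lemma nset_ub (f : Y -> R) M : 0 <= M -> (forall u, `|f u| <= M * `|u|) ->
  has_ubound (nset f).
Proof.
move=> M0 hb; exists M => _ [y /= y1 <-].
apply: le_trans (hb y) _; rewrite -[leRHS]mulr1; exact: ler_wpM2l.
Qed.

Lemma nset_n0 (f : Y -> R) : nset f !=set0.
Proof. by exists `|f 0|, 0 => //=; rewrite normr0. Qed.

Lemma dn_bound (F : Y -> R) M : islin F -> 0 <= M ->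
  (forall u, `|F u| <= M * `|u|) -> forall u, `|F u| <= dual_norm F * `|u|.
Proof.
move=> hl M0 hb u.
have [->|u0] := eqVneq u 0; first by rewrite (lin0 hl) !normr0 mulr0.
have nu : 0 < `|u| by rewrite normr_gt0.
have iu : 0 <= `|u|^-1 by rewrite invr_ge0 normr_ge0.
have : `|F (`|u|^-1 *: u)| <= dual_norm F.
  apply: ub_le_sup; first exact: nset_ub M0 hb.
  exists (`|u|^-1 *: u) => //=.
  by rewrite normrZ (ger0_norm iu) mulVf ?gt_eqF.
rewrite (linZ hl) normrM (ger0_norm iu) => h.
have := ler_wpM2l (ltW nu) h; rewrite mulrA mulfV ?gt_eqF // mul1r mulrC.
by [].
Qed.

Lemma dn_ge (f : Y -> R) (e : Y) (rho : R) : islin f -> dual_norm f = 1 -> 0 < rho ->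
  (forall u, `|u| <= 1 -> 0 <= f (e + rho *: u)) -> rho <= f e.
Proof.
move=> hl n1 r0 h.
suff : dual_norm f <= f e / rho.
  by rewrite n1 ler_pdivlMr // mul1r.
apply: ge_sup; first exact: nset_n0.
move=> _ [y /= y1 <-].
have h1 := h y y1; have h2 := h (- y); rewrite normrN in h2; have {}h2 := h2 y1.
rewrite (linD hl) (linZ hl) in h1; rewrite (linD hl) (linZ hl) (linN hl) in h2.
suff : `|f y| * rho <= f e.
  move=> h3; rewrite ler_pdivlMr //.
have [fy0|fy0] := leP 0 (f y).
  rewrite ger0_norm //; nra.
rewrite ltr0_norm //; nra.
Qed.

Lemma normalize (F : Y -> R) x0 : islin F -> (forall u, `|F u| <= `|u|) -> F x0 != 0 ->
  exists2 d : R, 0 < d &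
    dual_sphere R Y (fun y => d^-1 * F y) /\ forall u, `|d^-1 * F u| <= `|u|.
Proof.
move=> hl hb Fx0.
have hb1 u : `|F u| <= 1 * `|u| by rewrite mul1r.
have db := dn_bound hl ler01 hb1.
set d := dual_norm F in db *.
have d0 : 0 < d.
  have := db x0; have : 0 < `|F x0| by rewrite normr_gt0.
  move=> h1 h2; have : 0 < d * `|x0| by exact: lt_le_trans h1 h2.
  by rewrite pmulr_lgt0 // normr_gt0; apply: contraNneq Fx0 => ->; rewrite (lin0 hl).
have hd : 0 <= d^-1 by rewrite invr_ge0 ltW.
have hlg : islin (fun y => d^-1 * F y).
  by move=> a u v /=; rewrite hl mulrDr mulrCA.
have gb u : `|d^-1 * F u| <= `|u|.
  rewrite normrM (ger0_norm hd) ler_pdivrMl // ; exact: db.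
exists d => //; split => //; split.
  apply: (isdual_of_bound hlg ltr01) => u; rewrite mul1r; exact: gb.
apply: le_anti; apply/andP; split.
  apply: ge_sup; first exact: nset_n0.
  by move=> _ [y /= y1 <-]; apply: le_trans (gb y) y1.
have gub : has_ubound (nset (fun y => d^-1 * F y)).
  by apply: (nset_ub ler01) => u; rewrite mul1r.
have : d <= d * dual_norm (fun y => d^-1 * F y).
  apply: ge_sup; first exact: nset_n0.
  move=> _ [y /= y1 <-].
  have : `|d^-1 * F y| <= dual_norm (fun y => d^-1 * F y).
    by apply: (ub_le_sup gub); exists y.
  rewrite normrM (ger0_norm hd) => h.
  have := ler_wpM2l (ltW d0) h; rewrite mulrA mulfV ?gt_eqF // mul1r.
  by [].
by rewrite -[X in X <= _ -> _]mulr1 ler_pM2l.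
Qed.

Lemma sepY (K : set Y) x : K !=set0 -> closed K -> convex_set_Y K -> ~ K x ->
  exists g : Y -> R, [/\ dual_sphere R Y g, (forall u, `|g u| <= `|u|) &
    exists2 del : R, 0 < del & forall c, K c -> g x + del <= g c].
Proof.
move=> [c0 Kc0] cK cvx Kx.
have [r r0 hr] := closed_gap cK Kx.
have [F [hl [hb hs]]] := sep (ex_intro _ c0 Kc0) cvx r0 hr.
have Fn : F (c0 - x) != 0.
  by rewrite (linB hl) subr_eq0; apply/negP => /eqP h; have := hs c0 Kc0; rewrite h; lra.
have [d d0 [gs gb]] := normalize hl hb Fn.
exists (fun y => d^-1 * F y); split => //.
exists (d^-1 * r); first by rewrite mulr_gt0 // invr_gt0.
move=> c Kc; rewrite -mulrDr; apply: ler_wpM2l; [by rewrite invr_ge0; exact: ltW|exact: hs].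
Qed.
End DualY.

Section Fin.
Variables (R : realType) (Y : normedModType R).

Lemma isdual_comb (f g : Y -> R) (t : R) : is_dual f -> is_dual g ->
  is_dual (fun y => t * f y + (1 - t) * g y).
Proof.
move=> [lf cf] [lg cg]; split.
  by move=> a x y; rewrite lf lg; ring.
move=> x.
apply: (@continuousD _ _ _ (fun y => t * f y) (fun y => (1 - t) * g y)).
  by apply: (@continuousM _ _ (fun _ => t) f); [exact: cst_continuous|exact: cf].
by apply: (@continuousM _ _ (fun _ => 1 - t) g); [exact: cst_continuous|exact: cg].
Qed.

Lemma fin_sep (C : set (Y -> R)) (s : seq Y) (eps : R) : 0 < eps ->
  (exists g, C g /\ is_dual g) -> convex_dual C ->
  (forall g, is_dual g -> (forall y, y \in s -> `|g y - 0| < eps) -> ~ C g) ->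
  exists e : Y, forall g, C g -> is_dual g -> eps <= g e.
Proof.
move=> e0 [g0 [Cg0 dg0]] cvx hC.
pose n := size s.
pose T (g : Y -> R) : 'rV[R]_n := \row_(i < n) g (nth 0 s i).
pose W := [set T g | g in [set g | C g /\ is_dual g]].
have Wn : W !=set0 by exists (T g0), g0.
have Wc : convex_set_Y W.
  move=> _ _ t [g1 [C1 d1] <-] [g2 [C2 d2] <-] t01.
  exists (fun y => t * g1 y + (1 - t) * g2 y).
    split; [exact: cvx|exact: isdual_comb].
  by apply/rowP => i; rewrite !mxE.
have Wg : forall w, W w -> eps <= `|0 - w|.
  move=> _ [g [Cg dg] <-]; rewrite leNgt; apply/negP => hlt.
  apply: (hC g dg) => // y ys.
  rewrite subr0.
  have hi : (index y s < n)%N by rewrite index_mem.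
  have := le_bigmax 0 (fun ij : 'I_1 * 'I_n => `|T g ij.1 ij.2|) (0, Ordinal hi).
  rewrite /= mxE nth_index // => h; apply: le_lt_trans h _.
  by move: hlt; rewrite sub0r normrN /= [`|_|]mx_normrE.
have [F [hF [_ hs]]] := sep Wn Wc e0 Wg.
exists (\sum_(i < n) F 'e_i *: nth 0 s i) => g Cg dg.
have hg : islin g by case: dg.
have := hs (T g) (ex_intro2 _ _ g (conj Cg dg) erefl).
rewrite (lin0 hF) add0r (row_sum_delta (T g)).
rewrite (big_morph F (linD hF) (lin0 hF)) (big_morph g (linD hg) (lin0 hg)).
congr (_ <= _); apply: eq_bigr => i _.
by rewrite (linZ hF) (linZ hg) mxE mulrC.
Qed.
End Fin.

Section Main.
Variables (R : realType) (Y : normedModType R).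

Lemma isdual0 : is_dual (fun _ : Y => 0 : R).
Proof. split; [by move=> *; rewrite mulr0 addr0|exact: cst_continuous]. Qed.

Lemma wcc_not0 (X : set (Y -> R)) (e : Y) (rho : R) : 0 < rho ->
  (forall f, X f -> rho <= f e) -> ~ wstar_closed_conv X (fun _ : Y => 0 : R).
Proof.
move=> r0 hX [_ h].
have := h [set g | rho <= g e]; rewrite /= => /(_ hX) H.
suff : rho <= 0 by lra.
apply: H.
  move=> f g t /= hf hg /andP[t0 t1]; nra.
move=> f df /= hf; exists [:: e], (rho - f e); split; first lra.
move=> g dg /(_ e (mem_head _ _)) hge; rewrite ltr_norml in hge.
by case/andP: hge => _ h2 h3; lra.
Qed.

Lemma wcc_sep (X : set (Y -> R)) : (forall f, X f -> is_dual f) -> X !=set0 ->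
  ~ wstar_closed_conv X (fun _ : Y => 0 : R) ->
  exists e : Y, exists2 eps : R, 0 < eps & forall f, X f -> eps <= f e.
Proof.
move=> Xd [g0 Xg0] nw.
have : ~ (forall C, X `<=` C -> convex_dual C -> wstar_closed C -> C (fun _ : Y => 0 : R)).
  by move=> h; apply: nw; split => //; exact: isdual0.
move=> /existsNP [C /not_implyP [XC /not_implyP [cC /not_implyP [wC nC0]]]].
have [s [eps [e0 hs]]] := wC _ isdual0 nC0.
have [e he] := fin_sep e0 (ex_intro _ g0 (conj (XC _ Xg0) (Xd _ Xg0))) cC hs.
by exists e, eps => // f Xf; apply: he; [exact: XC|exact: Xd].
Qed.

Lemma notsetT (A : set Y) : A <> setT -> exists x, ~ A x.
Proof.
move=> H; apply/existsNP => h; apply: H; apply/seteqP; split => // y _; exact: h y.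
Qed.

Lemma lin_of_dual (f : Y -> R) : is_dual f -> islin f.
Proof. by case. Qed.

End Main.

Section Part1.
Variables (R : realType) (Y : normedModType R).
Variable A : set Y.
Hypotheses (An : A !=set0) (cA : closed A) (cvA : convex_set_Y A) (coA : cone A).

Let A0 : A 0.
Proof. by case: An => a Aa; rewrite -(scale0r a); apply: coA. Qed.

Let X := dual_sphere R Y `&` dual_cone A.

Lemma sepA x : ~ A x -> exists g, [/\ X g, g x < 0 & forall u, `|g u| <= `|u|].
Proof.
move=> Ax.
have [g [gs gb [del d0 hd]]] := sepY An cA cvA Ax.
have lg : islin g by case: gs => [[]].
exists g; split => //; last first.
  by have := hd 0 A0; rewrite (lin0 lg); lra.
split => //; split; first by case: gs.
move=> c Ac; rewrite leNgt; apply/negP => gc.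
pose t := (`|g x| + del + 1) / (- g c).
have t0 : 0 < t by rewrite /t divr_gt0 // ?oppr_gt0 //; have := normr_ge0 (g x); lra.
have := hd _ (coA (ltW t0) Ac); rewrite (linZ lg).
have -> : t * g c = - (`|g x| + del + 1).
  have gc0 : g c != 0 by rewrite lt_eqF.
  by rewrite /t; field; rewrite ?oppr_eq0 gc0.
have := ler_norm (- g x); rewrite normrN; lra.
Qed.

Lemma Xn : A <> setT -> X !=set0.
Proof.
by move=> h; have [x Ax] := notsetT h; have [g [Xg _ _]] := sepA Ax; exists g.
Qed.

Lemma part1a : A <> setT <-> dual_cone A <> [set (fun _ : Y => 0 : R)].
Proof.
split.
  move=> h0 h; have [x Ax] := notsetT h0; have [g [[_ Ag] gx _]] := sepA Ax.
  have : [set (fun _ : Y => 0 : R)] g by rewrite -h.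
  by move=> /= gE; move: gx; rewrite gE ltxx.
move=> h AT; apply: h; apply/seteqP; split.
  move=> f [df hf] /=; apply: funext => y.
  have lf : islin f by case: df.
  have := hf y; have := hf (- y); rewrite AT /= (linN lf) => /(_ I) h1 /(_ I) h2.
  lra.
by move=> f /= ->; split; [exact: isdual0|].
Qed.

Lemma part1b : A <> setT -> forall e : Y,
  (interior A) e <-> 0 < inf [set f e | f in X].
Proof.
move=> AT e; have Xne := Xn AT; split.
  move=> /nbhs_normP [r r0 hr].
  have r2 : 0 < r / 2 by rewrite divr_gt0.
  apply: (@lt_le_trans _ _ (r / 2)); first exact: r2.
  apply: lb_le_inf.
    by case: Xne => f Xf; exists (f e), f.
  move=> _ [f [[df n1] [_ Af]] <-].
  apply: dn_ge; [exact: lin_of_dual|exact: n1|exact: r2|].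
  move=> u u1; apply: Af; apply: hr => /=.
  rewrite opprD addrA subrr add0r normrN normrZ gtr0_norm //.
  have := ler_wpM2l (ltW r2) u1; lra.
move=> hi.
have hinf : has_inf [set f e | f in X].
  by apply/not_notP => h; move: hi; rewrite inf_out // ltxx.
have lbX f : X f -> inf [set f e | f in X] <= f e.
  by move=> Xf; apply: (ge_inf hinf.2); exists f.
apply/nbhs_normP; exists (inf [set f e | f in X]) => // y /= hy.
apply/not_notP => Ay.
have [g [Xg gy gb]] := sepA Ay.
have lg : islin g by case: Xg => [[[]]].
have := lbX g Xg; have := gb (e - y); rewrite (linB lg) => h1.
have := ler_norm (g e - g y); lra.
Qed.

Lemma part1c : interior A !=set0 <->
  (A = setT \/ ~ wstar_closed_conv X (fun _ : Y => 0 : R)).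
Proof.
split.
  move=> [e Ae]; have [AT|AT] := pselect (A = setT); first by left.
  right; have := (part1b AT e).1 Ae => hi.
  have hinf : has_inf [set f e | f in X].
    by apply/not_notP => h; move: hi; rewrite inf_out // ltxx.
  apply: (wcc_not0 hi) => f Xf; by apply: (ge_inf hinf.2); exists f.
have [AT|AT] := pselect (A = setT).
  by move=> _; rewrite AT interiorT; exists 0.
case => // nw.
have [e [eps e0 he]] := wcc_sep (fun f (Xf : X f) => proj1 (proj1 Xf)) (Xn AT) nw.
exists e; apply/(part1b AT e); apply: lt_le_trans e0 _; apply: lb_le_inf.
  by case: (Xn AT) => f Xf; exists (f e), f.
by move=> _ [f Xf <-]; exact: he.
Qed.
End Part1.

Section Part2.
Variables (R : realType) (Y : normedModType R).
Variable K : set Y.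
Hypotheses (Kn : K !=set0) (cK : closed K) (cvK : convex_set_Y K).

Let X := dual_sphere R Y `&` dual_opp (barrier K).

Lemma inX g : dual_sphere R Y g -> (exists M, forall c, K c -> - g c <= M) -> X g.
Proof.
move=> gs [M hM]; split => //; split; last by exists M.
have [lg cg] := gs.1; split.
  by move=> a x y /=; rewrite (lg a x y); ring.
by move=> x; apply: continuousN; exact: cg.
Qed.

Lemma rec_pos f v : X f -> recession_cone K v -> 0 <= f v.
Proof.
move=> [[[lf _] _] [_ [M hM]]] hv.
have lf' : islin f by [].
case: Kn => x Kx.
rewrite leNgt; apply/negP => fv.
pose l := (`|M| + `|f x| + 1) / (- f v).
have l0 : 0 < l.
  by rewrite /l divr_gt0 // ?oppr_gt0 //; have := normr_ge0 M; have := normr_ge0 (f x); lra.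
have := hM _ (hv x Kx l l0); rewrite (linD lf') (linZ lf').
have -> : l * f v = - (`|M| + `|f x| + 1).
  have fv0 : f v != 0 by rewrite lt_eqF.
  by rewrite /l; field; rewrite ?oppr_eq0 fv0.
have := ler_norm M; have := ler_norm (f x); lra.
Qed.

Lemma sepK y : ~ K y -> exists g, [/\ X g, (forall u, `|g u| <= `|u|) &
    exists2 del : R, 0 < del & forall c, K c -> g y + del <= g c].
Proof.
move=> Ky; have [g [gs gb [del d0 hd]]] := sepY Kn cK cvK Ky.
exists g; split => //; last by exists del.
apply: inX => //; exists (- g y - del) => c Kc; have := hd c Kc; lra.
Qed.

Lemma part2 : interior (recession_cone K) !=set0 <->
  (K = setT \/ ~ wstar_closed_conv X (fun _ : Y => 0 : R)).
Proof.
split.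
  move=> [e /nbhs_normP [r r0 hr]]; right.
  have r2 : 0 < r / 2 by rewrite divr_gt0.
  apply: (wcc_not0 r2) => f Xf.
  have [[df n1] _] := Xf.
  apply: dn_ge; [exact: lin_of_dual|exact: n1|exact: r2|].
  move=> u u1; have := @rec_pos f (e + (r / 2) *: u) Xf; apply; apply: hr => /=.
  rewrite opprD addrA subrr add0r normrN normrZ gtr0_norm //.
  have := ler_wpM2l (ltW r2) u1; lra.
have [KT|KT] := pselect (K = setT).
  move=> _; exists 0; rewrite KT.
  have -> : recession_cone [set: Y] = setT by apply/seteqP; split.
  by rewrite interiorT.
case => // nw.
have [x0 Kx0] := notsetT KT.
have Xne : X !=set0 by have [g [Xg _ _]] := sepK Kx0; exists g.
have [e [eps e0 he]] := wcc_sep (fun f (Xf : X f) => proj1 (proj1 Xf)) Xne nw.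
exists e; apply/nbhs_normP; exists eps => // v /= hv x Kx l l0.
apply/not_notP => Ky.
have [g [Xg gb [del d0 hd]]] := sepK Ky.
have lg : islin g by case: Xg => [[[]]].
have := hd x Kx; rewrite (linD lg) (linZ lg) => h1.
have := he g Xg; have := gb (e - v); rewrite (linB lg) => h2 h3.
have := ler_norm (g e - g v) => h4.
have gv : 0 < g v by lra.
have : 0 < l * g v by rewrite mulr_gt0.
lra.
Qed.
End Part2.

Unset Implicit Arguments.

Theorem lemma3p6 (R : realType) (Y : normedModType R) :
  (* (i) *)
  (forall A : set Y,
     A !=set0 -> closed A -> convex_set_Y A -> cone A ->
     (A <> setT <-> dual_cone A <> [set (fun _ : Y => 0 : R)]) /\
     (A <> setT -> forall e : Y,
        (interior A) e <->
        0 < inf [set f e | f in dual_sphere R Y `&` dual_cone A]) /\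
     (interior A !=set0 <->
        (A = setT \/
         ~ wstar_closed_conv (dual_sphere R Y `&` dual_cone A) (fun _ : Y => 0 : R))))
  /\
  (* (ii) *)
  (forall K : set Y,
     K !=set0 -> closed K -> convex_set_Y K ->
     (interior (recession_cone K) !=set0 <->
        (K = setT \/
         ~ wstar_closed_conv (dual_sphere R Y `&` dual_opp (barrier K))
             (fun _ : Y => 0 : R)))).
Proof.
split.
  move=> A An cA cvA coA; split; first exact: part1a.
  split; first exact: part1b.
  exact: part1c.
move=> K Kn cK cvK; exact: part2.
Qed.
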